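(* For every graph $G$, $\alpha\text{-}tw(G)=\mu\text{-}tw(M(G))$.
   Context: All graphs are finite and simple. $M(G)$ is the graph obtained from $G$ by adding, for each vertex $v\in V(G)$, a new vertex $v'$ and the edge $vv'$. A tree decomposition of a graph $G$ is a tree $T$ with bags $B_t\subseteq V(G)$ such that nodes containing a given vertex induce a connected subtree and every edge lies in some bag. An induced matching is a set $M$ of pairwise disjoint edges such that the subgraph induced by their endpoints has exactly the edges of $M$. For $S\subseteq V(G)$: $\mu_G(S)$ is the maximum size of an induced matching of $G$ all of whose edges intersect $S$; $\alpha_G(S)$ is the maximum size of an independent set of $G$ contained in $S$. For $\lambda\in\{\mu,\alpha\}$, $\lambda_G(\mathcal{T})=\max_t\lambda_G(B_t)$ and $\lambda\text{-}tw(G)$ is its minimum over all tree decompositions $\mathcal{T}$ of $G$. *)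

(* Defs.v *)
From mathcomp Require Import all_boot.
From mathcomp Require Import boolp.
Set Implicit Arguments. Unset Strict Implicit. Unset Printing Implicit Defensive.

(* A (finite simple) graph is a symmetric irreflexive relation e on a finType V. *)

(* M(G): vertex set V + V, where inr v is the new pendant vertex v'. *)
Definition Mrel (V : finType) (e : rel V) : rel (V + V) :=
  fun x y => match x, y with
  | inl u, inl v => e u v
  | inl u, inr v => u == v
  | inr u, inl v => u == v
  | inr _, inr _ => false
  end.

Definition is_tree (n : nat) (tE : rel 'I_n) : Prop :=
  [/\ 0 < n, symmetric tE, irreflexive tE,
      (forall x y : 'I_n, connect tE x y) &
      (forall c : seq 'I_n, 2 < size c -> ~~ ucycleb tE c)].

Record tdec (V : finType) (e : rel V) := TDec {
  td_n : nat;
  td_E : rel 'I_td_n;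
  td_bag : 'I_td_n -> {set V};
  td_tree : is_tree td_E;
  td_cover : forall v : V, exists t, v \in td_bag t;
  td_edge : forall u v : V, e u v -> exists t, (u \in td_bag t) && (v \in td_bag t);
  td_conn : forall (v : V) (t1 t2 : 'I_td_n), v \in td_bag t1 -> v \in td_bag t2 ->
      connect (fun a b => [&& td_E a b, v \in td_bag a & v \in td_bag b]) t1 t2
}.

Definition independent (V : finType) (e : rel V) (A : {set V}) : bool :=
  [forall u in A, forall v in A, ~~ e u v].

Definition alpha (V : finType) (e : rel V) (S : {set V}) : nat :=
  \max_(A : {set V} | (A \subset S) && independent e A) #|A|.

Definition is_edge (V : finType) (e : rel V) (X : {set V}) : bool :=
  [exists u, exists v, (X == [set u; v]) && e u v].

Definition induced_matching (V : finType) (e : rel V) (M : {set {set V}}) : bool :=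
  [forall X in M, is_edge e X] &&
  [forall X in M, forall Y in M, (X != Y) ==>
     [forall u in X, forall v in Y, (u != v) && ~~ e u v]].

Definition mu (V : finType) (e : rel V) (S : {set V}) : nat :=
  \max_(M : {set {set V}} | induced_matching e M && [forall X in M, X :&: S != set0])
     #|M|.

Definition td_width (V : finType) (e : rel V) (lam : {set V} -> nat) (D : tdec e) : nat :=
  \max_(t < td_n D) lam (@td_bag _ _ D t).

Definition width_le (V : finType) (e : rel V) (lam : {set V} -> nat) (k : nat) : Prop :=
  exists D : tdec e, td_width lam D <= k.

Definition trivial_tdec (V : finType) (e : rel V) : tdec e.
Proof.
refine (@TDec V e 1 (fun _ _ => false) (fun _ => setT) _ _ _ _).
- split => //.
  + move=> x y; by rewrite (ord1 x) (ord1 y) connect0.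
  + by case=> [|x [|y c]] //= _; rewrite /ucycleb /=; case: c.
- move=> v; exists ord0; by rewrite inE.
- move=> u v _; exists ord0; by rewrite !inE.
- move=> v t1 t2 _ _; by rewrite (ord1 t1) (ord1 t2) connect0.
Defined.

Lemma width_le_ex (V : finType) (e : rel V) (lam : {set V} -> nat) :
  exists k, `[< width_le e lam k >].
Proof. exists (td_width lam (trivial_tdec e)); apply/asboolP; by exists (trivial_tdec e). Qed.

Definition lambda_tw (V : finType) (e : rel V) (lam : {set V} -> nat) : nat :=
  ex_minn (width_le_ex e lam).

Definition alpha_tw (V : finType) (e : rel V) : nat := lambda_tw e (alpha e).
Definition mu_tw (V : finType) (e : rel V) : nat := lambda_tw e (mu e).

(* Main.v *)
Require Import Defs.
From mathcomp Require Import all_boot.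
From mathcomp Require Import boolp.
Set Implicit Arguments. Unset Strict Implicit. Unset Printing Implicit Defensive.

Section S.
Variables (V : finType) (e : rel V).

Lemma im_edge (W : finType) (f : rel W) M X : induced_matching f M -> X \in M -> is_edge f X.
Proof. by move=> /andP[/forallP H _] XM; move: (H X); rewrite XM. Qed.

Lemma im_sep (W : finType) (f : rel W) M X Y u v : induced_matching f M -> X \in M -> Y \in M ->
  X != Y -> u \in X -> v \in Y -> (u != v) && ~~ f u v.
Proof.
move=> /andP[_ /forallP H] XM YM XY uX vY.
move: (H X); rewrite XM /= => /forallP/(_ Y); rewrite YM XY /= => /forallP/(_ u).
by rewrite uX /= => /forallP/(_ v); rewrite vY.
Qed.

Lemma alpha_le_mu (S : {set V + V}) :
  alpha e [set v | inl v \in S] <= mu (Mrel e) S.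
Proof.
apply/bigmax_leqP => A /andP[AS /forallP Ai].
pose M := [set [set (inl v : V + V); inr v] | v in A].
have -> : #|A| = #|M|.
  rewrite card_imset // => v w /setP /(_ (inl v)).
  by rewrite !inE eqxx /= => /esym /orP[/eqP [] | /eqP].
apply: leq_bigmax_cond; apply/andP; split.
  apply/andP; split.
    apply/forallP => X; apply/implyP => /imsetP[v vA ->].
    by apply/existsP; exists (inl v); apply/existsP; exists (inr v); rewrite eqxx /=.
  apply/forallP => X; apply/implyP => /imsetP[v vA ->].
  apply/forallP => Y; apply/implyP => /imsetP[w wA ->].
  apply/implyP => neq.
  have vw : v != w by apply: contraNneq neq => ->.
  apply/forallP => x; apply/implyP; rewrite !inE => /orP[]/eqP->;
  apply/forallP => y; apply/implyP; rewrite !inE => /orP[]/eqP-> //=;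
  rewrite ?vw //=.
  move: (Ai v); rewrite vA /= => /forallP/(_ w); by rewrite wA.
apply/forallP => X; apply/implyP => /imsetP[v vA ->].
apply/set0Pn; exists (inl v); rewrite !inE eqxx /=.
by move/subsetP: AS => /(_ v vA); rewrite inE.
Qed.

Definition base (x : V + V) : V := match x with inl v => v | inr v => v end.

Lemma mu_le_alpha (B : {set V}) : irreflexive e ->
  mu (Mrel e) [set x | base x \in B] <= alpha e B.
Proof.
move=> irr.
apply/bigmax_leqP => M /andP[IM /forallP Mm].
pose f (X : {set V + V}) := [pick v | (inl v \in X) && (v \in B)].
have fP : forall X, X \in M -> exists2 v, f X = Some v & (inl v \in X) && (v \in B).
  move=> X XM; rewrite /f; case: pickP => [v Hv|H]; first by exists v.
  exfalso; move: (Mm X); rewrite XM /= => /set0Pn[x]; rewrite !inE => /andP[xX xB].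
  have [a [b /andP [/eqP XE ab]]] : exists a b, (X == [set a; b]) && Mrel e a b.
    by move: (im_edge IM XM) => /existsP[a /existsP[b h]]; exists a, b.
  case: x xX xB => [v|v] xX xB /=; first by move: (H v); rewrite xX xB.
  have : inl v \in X.
    rewrite XE !inE; move: xX; rewrite XE !inE => /orP[]/eqP E; rewrite -E in ab; clear XE.
      by case: b ab => //= w /eqP ->; rewrite eqxx orbT.
    by case: a ab => //= w /eqP ->; rewrite eqxx.
  by move=> h; move: (H v); rewrite h xB.
pose A := [set v | [exists X in M, f X == Some v]].
have finj : {in M &, injective f}.
  move=> X Y XM YM fXY; case: (fP X XM) => v fX /andP[vX _].
  case: (fP Y YM) => w fY /andP[wY _].
  apply/eqP; apply: contraT => XY.
  move: (im_sep IM XM YM XY vX wY); rewrite fXY fY in fX; case: fX => ->.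
  by rewrite eqxx.
rewrite -(card_in_imset finj).
have le : #|f @: M| <= #|Some @: A|.
  apply: subset_leq_card; apply/subsetP => o /imsetP[X XM ->].
  case: (fP X XM) => v fX _; rewrite fX; apply: imset_f.
  by rewrite inE; apply/existsP; exists X; rewrite XM fX eqxx.
apply: (leq_trans le); rewrite card_imset; last by apply: Some_inj.
apply: leq_bigmax_cond; apply/andP; split.
  apply/subsetP => v; rewrite inE => /existsP[X /andP[XM /eqP fX]].
  by case: (fP X XM) => w; rewrite fX => -[<-] /andP[].
apply/forallP => u; apply/implyP; rewrite inE => /existsP[X /andP[XM /eqP fX]].
apply/forallP => v; apply/implyP; rewrite inE => /existsP[Y /andP[YM /eqP fY]].
case: (fP X XM) => u'; rewrite fX => -[<-] /andP[uX _].
case: (fP Y YM) => v'; rewrite fY => -[<-] /andP[vY _].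
have [XY|XY] := eqVneq X Y.
  by subst; rewrite fX in fY; case: fY => ->; rewrite irr.
by move: (im_sep IM XM YM XY uX vY) => /andP[].
Qed.

End S.

Lemma dir1 (V : finType) (e : rel V) k :
  width_le (Mrel e) (mu (Mrel e)) k -> width_le e (alpha e) k.
Proof.
case=> D Dw.
have cov : forall v : V, exists t, v \in [set w | inl w \in @td_bag _ _ D t].
  move=> v; case: (td_cover D (inl v)) => t h; exists t; by rewrite inE.
have edg : forall u v : V, e u v -> exists t,
   (u \in [set w | inl w \in @td_bag _ _ D t]) && (v \in [set w | inl w \in @td_bag _ _ D t]).
  move=> u v uv; case: (td_edge (e:=Mrel e) D (u:=inl u) (v:=inl v) uv) => t h.
  by exists t; rewrite !inE.
have cn : forall (v : V) (t1 t2 : 'I_(td_n D)), v \in [set w | inl w \in @td_bag _ _ D t1] ->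
   v \in [set w | inl w \in @td_bag _ _ D t2] ->
   connect (fun a b => [&& @td_E _ _ D a b, v \in [set w | inl w \in @td_bag _ _ D a] &
      v \in [set w | inl w \in @td_bag _ _ D b]]) t1 t2.
  move=> v t1 t2; rewrite !inE => h1 h2.
  rewrite (@eq_connect _ _ (fun a b => [&& @td_E _ _ D a b, inl v \in @td_bag _ _ D a & inl v \in @td_bag _ _ D b])).
    exact: td_conn h1 h2.
  by move=> a b; rewrite !inE.
exists (TDec (td_tree D) cov edg cn).
apply: leq_trans Dw; apply/bigmax_leqP => t _ /=.
apply: leq_trans (alpha_le_mu e (@td_bag _ _ D t)) _.
exact: (leq_bigmax_cond (F := fun t => mu (Mrel e) (@td_bag _ _ D t))).
Qed.

Lemma dir2 (V : finType) (e : rel V) k : irreflexive e ->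
  width_le e (alpha e) k -> width_le (Mrel e) (mu (Mrel e)) k.
Proof.
move=> irr [D Dw].
pose bg t := [set x : V + V | base x \in @td_bag _ _ D t].
have cov : forall v, exists t, v \in bg t.
  move=> v; case: (td_cover D (base v)) => t h; exists t; by rewrite inE.
have edg : forall u v, Mrel e u v -> exists t, (u \in bg t) && (v \in bg t).
  case=> u [] v /=.
  - by move=> uv; case: (td_edge D uv) => t h; exists t; rewrite !inE.
  - by move=> /eqP <-; case: (td_cover D u) => t h; exists t; rewrite !inE h.
  - by move=> /eqP <-; case: (td_cover D u) => t h; exists t; rewrite !inE h.
  - by [].
have cn : forall v t1 t2, v \in bg t1 -> v \in bg t2 ->
   connect (fun a b => [&& @td_E _ _ D a b, v \in bg a & v \in bg b]) t1 t2.
  move=> v t1 t2; rewrite !inE => h1 h2.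
  rewrite (@eq_connect _ _ (fun a b => [&& @td_E _ _ D a b, base v \in @td_bag _ _ D a & base v \in @td_bag _ _ D b])).
    exact: td_conn h1 h2.
  by move=> a b; rewrite !inE.
exists (TDec (td_tree D) cov edg cn).
apply: leq_trans Dw; apply/bigmax_leqP => t _ /=.
apply: leq_trans (mu_le_alpha (@td_bag _ _ D t) irr) _.
exact: (leq_bigmax_cond (F := fun t => alpha e (@td_bag _ _ D t))).
Qed.

Theorem mainTheorem9 (V : finType) (e : rel V) :
  symmetric e -> irreflexive e ->
  alpha_tw e = mu_tw (Mrel e).
Proof.
move=> _ irr; rewrite /alpha_tw /mu_tw /lambda_tw.
case: ex_minnP => m /asboolP Hm minm.
case: ex_minnP => n /asboolP Hn minn.
apply/eqP; rewrite eqn_leq; apply/andP; split.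
  by apply: minm; apply/asboolP; apply: dir1.
by apply: minn; apply/asboolP; apply: dir2.
Qed.
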